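(* Let $\Gamma=(V,E,w)$ be a finite simple weighted digraph with vertex set $V=\{1,\dots,n\}$ and weights $0\le w_{ij}\le 1$ (with $w_{ij}=0$ iff $(i,j)\notin E$), and let $L=D-A$ be its graph Laplacian. Then $\Gamma$ is a complete dominance graph if and only if there exists a permutation matrix $P$ such that, for each $i=1,\dots,n$, $P\mathbf{v}_i$ is an eigenvector of $L$ for the eigenvalue $n-i$, where $\mathbf{v}_i=\sum_{k=1}^{i}\mathbf{e}_k$ and $\mathbf{e}_k$ is the $k$th standard basis vector of $\mathbb{R}^n$.
   Context: $d^{+}(i)=\sum_{j\in V} w_{ij}$, $D=\mathrm{diag}(d^{+}(1),\dots,d^{+}(n))$, $A=[w_{ij}]$, $L=D-A$. A tournament is a digraph such that for each pair of distinct vertices exactly one of $(i,j),(j,i)$ is an edge. A complete dominance graph is an acyclic tournament in which every edge has weight $1$. *)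

(* Defs.v *)
From HB Require Import structures.
From mathcomp Require Import all_boot all_order all_algebra.
From mathcomp Require Import fingroup perm.
Set Implicit Arguments. Unset Strict Implicit. Unset Printing Implicit Defensive.
Import Order.TTheory GRing.Theory Num.Theory.
Local Open Scope ring_scope.

Section Defs.
Variables (R : numDomainType) (n : nat).
Implicit Type w : 'M[R]_n.

Definition edge w : rel 'I_n := fun i j => w i j != 0.

Definition is_tournament w : Prop :=
  forall i j : 'I_n, i != j -> (edge w i j) (+) (edge w j i).

Definition is_acyclic w : Prop :=
  forall i j : 'I_n, edge w i j -> ~~ connect (edge w) j i.

Definition complete_dominance w : Prop :=
  [/\ is_tournament w, is_acyclic w & forall i j, edge w i j -> w i j = 1].

Definition outdeg w (i : 'I_n) : R := \sum_(j < n) w i j.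

Definition laplacian w : 'M[R]_n := diag_mx (\row_i outdeg w i) - w.

Definition eigenvector (L : 'M[R]_n) (lam : R) (x : 'cV[R]_n) : Prop :=
  x != 0 /\ L *m x = lam *: x.

(* v_k = e_1 + ... + e_k (1-based), i.e. entries j < k (0-based) equal 1 *)
Definition vvec (k : nat) : 'cV[R]_n := \col_(j < n) (if (j < k)%N then 1 else 0).
End Defs.

(* Main.v *)
Require Import Defs.
From HB Require Import structures.
From mathcomp Require Import all_boot all_order all_algebra.
From mathcomp Require Import fingroup perm zify.
Import Order.TTheory GRing.Theory Num.Theory.
Local Open Scope ring_scope.

Section S.
Variables (R : realFieldType) (n : nat).

Lemma pv_entry (s : 'S_n) k i :
  (perm_mx s *m vvec R n k) i 0 = ((s i < k)%N)%:R.
Proof. rewrite -row_permE /row_perm mxE. by rewrite mxE; case: (s i < k)%N. Qed.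

Lemma lap_entry (w : 'M[R]_n) (x : 'cV[R]_n) i :
  (laplacian w *m x) i 0 = \sum_(j < n) w i j * (x i 0 - x j 0).
Proof.
rewrite /laplacian mulmxBl mul_diag_mx !mxE /outdeg mulr_suml -sumrB.
by apply: eq_bigr => j _; rewrite mulrBr.
Qed.

Lemma count_gt (m : nat) : \sum_(o < n) ((m < o)%N)%:R = (n - m.+1)%:R :> R.
Proof.
rewrite -natr_sum; congr (_%:R).
elim: n => [|k IH]; first by rewrite big_ord0.
rewrite big_ord_recr /= IH; case: ltnP => h; lia.
Qed.

Lemma count_gt_s (s : 'S_n) (m : nat) :
  \sum_(l < n) ((m < s l)%N)%:R = (n - m.+1)%:R :> R.
Proof.
rewrite -count_gt (reindex_inj (@perm_inj _ (s^-1)%g)) /=.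
by apply: eq_bigr => l _; rewrite permKV.
Qed.

Lemma one_sub_lt (a b : nat) : (1 - ((a < b.+1)%N)%:R : R) = ((b < a)%N)%:R.
Proof. rewrite ltnS leqNgt; case: (b < a)%N => /=; by rewrite ?subr0 ?subrr. Qed.

Lemma formula_eig (w : 'M[R]_n) (s : 'S_n)
  (hf : forall i j, w i j = ((s i < s j)%N)%:R) (m : 'I_n) :
  eigenvector (laplacian w) (n - m.+1)%:R (perm_mx s *m vvec R n m.+1).
Proof.
split.
  apply/negP => /eqP h.
  pose i0 : 'I_n := (s^-1)%g (Ordinal (leq_ltn_trans (leq0n m) (ltn_ord m))).
  have := congr1 (fun M : 'cV[R]_n => M i0 0) h.
  by rewrite pv_entry /i0 permKV /= mxE; apply/eqP; rewrite oner_eq0.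
apply/matrixP => i j; rewrite ord1 lap_entry [in RHS]mxE pv_entry.
under eq_bigr do rewrite hf !pv_entry.
case: (ltnP (s i) m.+1) => hi.
  rewrite mulr1 -(count_gt_s s); apply: eq_bigr => l _.
  case: (ltnP (s i) (s l)) => ?; case: (ltnP (s l) m.+1) => ?; case: (ltnP m (s l)) => ? //=;
    try lia; by rewrite ?mul1r ?mul0r ?subrr ?subr0.
rewrite mulr0 big1 // => l _.
case: (ltnP (s i) (s l)) => ?; case: (ltnP (s l) m.+1) => ? //=; try lia; by rewrite ?mul0r ?subrr ?mulr0.
Qed.

Lemma eig_formula (w : 'M[R]_n) (s : 'S_n)
  (hw : forall i j, 0 <= w i j <= 1) (hloop : forall i, w i i = 0)
  (he : forall m : 'I_n,
    eigenvector (laplacian w) (n - m.+1)%:R (perm_mx s *m vvec R n m.+1)) :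
  forall i j, w i j = ((s i < s j)%N)%:R.
Proof.
move=> i j; case: (ltngtP (s i) (s j)) => h.
- have := (he (s i)).2 => /matrixP/(_ i 0).
  rewrite lap_entry [in RHS]mxE !pv_entry ltnSn mulr1.
  under eq_bigr do rewrite pv_entry one_sub_lt.
  rewrite -(count_gt_s s) => /esym/eqP; rewrite -subr_eq0 -sumrB => /eqP hs.
  have hnn : forall l : 'I_n, true -> 0 <= ((s i < s l)%N)%:R - w i l * ((s i < s l)%N)%:R.
    move=> l _; case: (s i < s l)%N; rewrite /= ?mulr1 ?mulr0 ?subrr //.
    by rewrite subr_ge0; case/andP: (hw i l).
  have := psumr_eq0P hnn hs (i := j) isT; rewrite h /= mulr1 => /eqP; rewrite subr_eq0 => /eqP <- //.
- have := (he (s j)).2 => /matrixP/(_ i 0).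
  rewrite lap_entry [in RHS]mxE !pv_entry.
  rewrite (_ : (s i < (s j).+1)%N = false) /= ?mulr0; last by apply/negbTE; rewrite -leqNgt.
  under eq_bigr do rewrite pv_entry sub0r mulrN.
  rewrite sumrN => /eqP; rewrite oppr_eq0 => /eqP hs.
  have hnn : forall l : 'I_n, true -> 0 <= w i l * ((s l < (s j).+1)%N)%:R.
    move=> l _; apply: mulr_ge0; first by case/andP: (hw i l).
    by case: (_ < _)%N.
  by have := psumr_eq0P hnn hs (i := j) isT; rewrite ltnSn mulr1.
- have := val_inj h => /perm_inj ->; by rewrite hloop.
Qed.

Lemma formula_cd (w : 'M[R]_n) (s : 'S_n)
  (hf : forall i j, w i j = ((s i < s j)%N)%:R) : complete_dominance w.
Proof.
have he : forall i j, edge w i j = (s i < s j)%N.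
  by move=> i j; rewrite /edge hf pnatr_eq0; case: (s i < s j)%N.
have hc : forall x y, connect (edge w) x y -> (s x <= s y)%N.
  move=> x y /connectP [p pth ->]; elim: p x pth => [|a p IH] x //= /andP [hxa hp].
  have := IH a hp; rewrite he in hxa; move=> h2; exact: leq_trans (ltnW hxa) h2.
split.
- move=> i j hij; rewrite !he.
  have : s i != s j by rewrite (inj_eq perm_inj).
  rewrite -(inj_eq val_inj) /=; case: ltngtP => //.
- move=> i j; rewrite he => hij; apply/negP => /hc; lia.
- by move=> i j; rewrite he hf => ->.
Qed.

Lemma cd_formula (w : 'M[R]_n) (hw : forall i j, 0 <= w i j <= 1) :
  complete_dominance w -> exists s : 'S_n, forall i j, w i j = ((s i < s j)%N)%:R.
Proof.
case=> ht ha h1.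
have irr : forall i, ~~ edge w i i.
  by move=> i; apply/negP => hii; have := ha i i hii; rewrite connect0.
have tr : forall i j k, edge w i j -> edge w j k -> edge w i k.
  move=> i j k hij hjk; case: (eqVneq i k) => [eik|nik].
    by subst k; have := ha i j hij; rewrite connect1.
  have := ht i k nik; case: (boolP (edge w i k)) => //= hik hki.
  have := ha i j hij; by rewrite (connect_trans (connect1 hjk) (connect1 hki)).
pose indeg i := #|[set j | edge w j i]|.
have key : forall i j, edge w i j -> (indeg i < indeg j)%N.
  move=> i j hij; apply: proper_card; apply/properP; split.
    by apply/subsetP => x; rewrite !inE => hx; apply: tr hx hij.
  by exists i; rewrite !inE ?hij ?(negbTE (irr i)).
have bound : forall i, (indeg i < n)%N.
  move=> i; rewrite -[n in (_ < n)%N]card_ord -cardsT; apply: proper_card; apply/properP; split.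
    exact: subsetT.
  by exists i; rewrite !inE ?(negbTE (irr i)).
pose f i : 'I_n := Ordinal (bound i).
have finj : injective f.
  move=> i j /(congr1 val) /= hij; apply/eqP; apply/negPn/negP => hne.
  have := ht i j hne; case ei: (edge w i j); case ej: (edge w j i) => //= _.
    by have := key _ _ ei; lia.
  by have := key _ _ ej; lia.
exists (perm finj) => i j; rewrite !permE /=.
case: (boolP (edge w i j)) => hij.
  by rewrite (h1 _ _ hij) key.
have -> : w i j = 0 by apply/eqP; move: hij; rewrite /edge negbK.
case: (eqVneq i j) => [->|nij]; first by rewrite ltnn.
have := ht i j nij; rewrite (negbTE hij) /= => hji.
by have := key _ _ hji; case: ltngtP.
Qed.
End S.

Theorem theorem3p2 (R : realFieldType) (n : nat) (w : 'M[R]_n)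
  (hw : forall i j, 0 <= w i j <= 1) (hloop : forall i, w i i = 0) :
  complete_dominance w <->
  exists s : 'S_n, forall i : 'I_n,
    eigenvector (laplacian w) (n - i.+1)%:R (perm_mx s *m vvec R n i.+1).
Proof.
split.
  by move=> /(@cd_formula R n w hw) [s hs]; exists s; apply: formula_eig.
by move=> [s hs]; apply: (@formula_cd R n w s); exact: eig_formula.
Qed.
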